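(* Let $n\geqslant1$ and let $G_1,\dots,G_n$ be groups. For each $1\leqslant i\leqslant n$ let $A_i\subseteq G_i$ be a subset with a minimal complement $M_i$ in $G_i$. Then $\prod_{i=1}^nM_i$ is a minimal complement of $\prod_{i=1}^nA_i$ in $\prod_{i=1}^nG_i$.
   Context: A nonempty $W'\subseteq G$ is a complement to $W\subseteq G$ if $WW'=\{ww':w\in W,w'\in W'\}=G$; it is a minimal complement if no proper subset of $W'$ is a complement to $W$. Products of groups carry the componentwise operation. *)

(* Defs.v *)
From HB Require Import structures.
From mathcomp Require Import all_boot.
From mathcomp Require Import monoid.

Set Implicit Arguments.
Unset Strict Implicit.
Unset Printing Implicit Defensive.

Local Open Scope group_scope.

(* Subsets of a (possibly infinite) type, as Prop-valued predicates. *)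
Definition subset_of (T : Type) := T -> Prop.

Definition is_complement (G : magmaType) (W W' : subset_of G) : Prop :=
  (exists w', W' w') /\
  (forall g : G, exists w w', W w /\ W' w' /\ w * w' = g).

Definition is_minimal_complement (G : magmaType) (W W' : subset_of G) : Prop :=
  is_complement W W' /\
  (forall W'' : subset_of G,
      (forall x, W'' x -> W' x) -> (exists x, W' x /\ ~ W'' x) ->
      ~ is_complement W W'').

Definition prodG (n : nat) (G : 'I_n -> groupType) : Type := forall i, G i.

Definition prodG_mul (n : nat) (G : 'I_n -> groupType)
  (x y : prodG G) : prodG G := fun i => x i * y i.

HB.instance Definition _ (n : nat) (G : 'I_n -> groupType) :=
  hasMul.Build (prodG G) (@prodG_mul n G).

Definition prod_subset (n : nat) (G : 'I_n -> groupType)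
  (A : forall i, subset_of (G i)) : subset_of (prodG G) :=
  fun x => forall i, A i (x i).

(* Main.v *)
Require Import Defs.
From HB Require Import structures.
From mathcomp Require Import all_boot.
From mathcomp Require Import monoid.
From Stdlib Require Import Classical ClassicalEpsilon FunctionalExtensionality.

Local Open Scope group_scope.

Theorem proposition5p1 (n : nat) (G : 'I_n -> groupType)
  (A M : forall i : 'I_n, subset_of (G i)) :
  (1 <= n)%N ->
  (forall i : 'I_n, is_minimal_complement (A i) (M i)) ->
  is_minimal_complement (prod_subset A) (prod_subset M).
Proof.
move=> _ hM; split.
  split.
    exists (fun i => proj1_sig (constructive_indefinite_description _ (proj1 (proj1 (hM i))))).
    move=> i; exact: proj2_sig (constructive_indefinite_description _ (proj1 (proj1 (hM i)))).
  move=> g.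
  have H i : exists p : G i * G i, A i p.1 /\ M i p.2 /\ p.1 * p.2 = g i.
    have [a [m [Ha [Hm E]]]] := proj2 (proj1 (hM i)) (g i).
    by exists (a, m).
  pose p i := proj1_sig (constructive_indefinite_description _ (H i)).
  have Hp i := proj2_sig (constructive_indefinite_description _ (H i)).
  exists (fun i => (p i).1 : G i), (fun i => (p i).2 : G i).
  split; first by move=> i; case: (Hp i).
  split; first by move=> i; case: (Hp i) => _ [].
  apply: functional_extensionality_dep => i.
  by case: (Hp i) => _ [].
move=> W'' sub [x [Mx nx]] [_ cW].
have key i : exists gi : G i, forall a m, A i a -> M i m -> a * m = gi -> m = x i.
  apply: NNPP => nE.
  apply: (proj2 (hM i) (fun m => M i m /\ m <> x i)).
  - by move=> m [].
  - by exists (x i); split => // -[].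
  split.
    have [a [m [Ha [Hm E]]]] := proj2 (proj1 (hM i)) (1 : G i).
    have [g0 _] := proj1 (proj1 (hM i)).
    apply: NNPP => nm; apply: nE; exists (1 : G i) => a' m' Ha' Hm' E'.
    apply: NNPP => ne; apply: nm; exists m'; by split.
  move=> g; apply: NNPP => ng; apply: nE; exists g => a m Ha Hm E.
  apply: NNPP => ne; apply: ng; exists a, m; split => //; by split.
pose g : prodG G := fun i => proj1_sig (constructive_indefinite_description _ (key i)).
have Hg i := proj2_sig (constructive_indefinite_description _ (key i)).
have [a [w [Ha [Hw E]]]] := cW g.
apply: nx.
have -> : x = w.
  apply: functional_extensionality_dep => i.
  symmetry; apply: (Hg i (a i)) => //; first exact: (sub _ Hw i).
  have := f_equal (fun f : prodG G => f i) E; exact.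

exact: Hw.
Qed.
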